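(* Let $h>0$, $N,s\in\mathbb{N}$ with $s\ge1$, $\mu>0$, $\alpha,\beta\in[0,1/2]$, and let $L:\mathbb{R}^d\times\mathbb{R}^d\to\mathbb{R}$ be $C^1$. Fix control points $0=d_0<d_1<\dots<d_s=1$, Lagrange polynomials $\ell_\nu$ of degree $s$ with $\ell_\nu(d_i)=\delta_{\nu i}$, and a quadrature rule $(b_i,c_i)_{i=1}^r$ with $c_i\in[0,1]$. For $(q^0,\dots,q^s)\in(\mathbb{R}^d)^{s+1}$ define the polynomial $q(\tau)=\sum_{\nu=0}^s q^\nu\ell_\nu(\tau)$ and the discrete Lagrangian $$L_d(q^0,\dots,q^s)=h\sum_{i=1}^r b_i\,L\Big(\sum_{\nu=0}^s q^\nu\ell_\nu(c_i),\ \tfrac1h\sum_{\nu=0}^s q^\nu\dot\ell_\nu(c_i)\Big).$$ Consider unknowns $x_k^\nu,y_k^\nu\in\mathbb{R}^d$, $k=0,\dots,N-1$, $\nu=0,\dots,s$, subject to $x_k^s=x_{k+1}^0$, $y_k^s=y_{k+1}^0$ ($k=0,\dots,N-2$), and write $x_k:=x_k^0$, $y_k:=y_k^0$ for $k\le N-1$, $x_N:=x_{N-1}^s$, $y_N:=y_{N-1}^s$. Let $\gamma=\rho/\sigma$ with $\rho_0/\sigma_0>0$ (e.g. the BDF function $\gamma_p(z)=\sum_{j=1}^p\frac1j(1-z)^j$), let $\omega_n^{(a)}$ be the Taylor coefficients of $(\gamma(z)/h)^{-a}$, and set $\mathcal{J}_{-}^{a}x_k=\sum_{n=0}^{k}\omega_n^{(a)}x_{k-n}$,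 $\mathcal{J}_{+}^{a}y_k=\sum_{n=0}^{N-k}\omega_n^{(a)}y_{k+n}$. Define the action $$\mathcal{S}_d=\sum_{k=0}^{N-1}\big(L_d(x_k^0,\dots,x_k^s)+L_d(y_k^0,\dots,y_k^s)\big)-\mu h\sum_{k=0}^{N}\mathcal{J}^{-\alpha}_{-}x_k\cdot\mathcal{J}^{-\beta}_{+}y_k .$$ Suppose the following hold, with $D_i$ the gradient of $L_d$ with respect to its $i$-th argument: (i) $D_{s+1}L_d(x_{k-1}^0,\dots,x_{k-1}^s)+D_1L_d(x_k^0,\dots,x_k^s)-\mu h\,\mathcal{J}^{-(\alpha+\beta)}_{-}x_k^0=0$ for $k=1,\dots,N-1$; (ii) $D_iL_d(x_k^0,\dots,x_k^s)=0$ for $k=0,\dots,N-1$, $i=2,\dots,s$; (iii) $D_{s+1}L_d(y_{k-1}^0,\dots,y_{k-1}^s)+D_1L_d(y_k^0,\dots,y_k^s)-\mu h\,\mathcal{J}^{-(\alpha+\beta)}_{+}y_k^0=0$ for $k=1,\dots,N-1$; (iv) $D_iL_d(y_k^0,\dots,y_k^s)=0$ for $k=0,\dots,N-1$, $i=2,\dots,s$. Then for every family of variations $\delta x_k^\nu\in\mathbb{R}^d$ compatible with the transition condition ($\delta x_k^s=\delta x_{k+1}^0$) and with $\delta x_0^0=0$, $\delta x_{N-1}^s=0$, the derivative at $\epsilon=0$ of $\epsilon\mapsto\mathcal{S}_d$ evaluated at $(x_k^\nu+\epsilon\delta x_k^\nu,\ y_k^\nu+\epsilon\delta x_k^\nu)$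 vanishes; i.e. (i)–(iv) are sufficient conditions for extremals of $\mathcal{S}_d$ under restricted variations.
   Context: This is the higher-order (Galerkin) fractional variational integrator: the conservative part uses polynomial interpolation of degree $s$ on each interval $[kh,(k+1)h]$ with a quadrature rule, while the fractional part uses convolution quadrature on the main nodes only. Restricted variations: the same variation is applied to the doubled variables $x$ and $y$. The continuous model being discretized is $\frac{d}{dt}\partial_{\dot x}L-\partial_xL=-\mu D_-^{\alpha+\beta}x$. *)

(* Defs.v *)
From HB Require Import structures.
From mathcomp Require Import all_boot all_order all_algebra.
From mathcomp Require Import all_classical all_reals all_analysis.
Set Implicit Arguments. Unset Strict Implicit. Unset Printing Implicit Defensive.
Import Order.TTheory GRing.Theory Num.Theory.
Import numFieldNormedType.Exports.
Local Open Scope ring_scope.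

Section Defs.
Variable R : realType.
Variable d : nat.
Notation vec := 'rV[R]_d.

Definition dotv (u v : vec) : R := \sum_(j < d) u 0 j * v 0 j.

Definition Ld (h : R) (L : vec * vec -> R) (s : nat) (ell : nat -> {poly R})
    (r : nat) (b c : nat -> R) (q : nat -> vec) : R :=
  h * \sum_(1 <= i < r.+1)
        b i * L (\sum_(nu < s.+1) (ell nu).[c i] *: q nu,
                 h^-1 *: \sum_(nu < s.+1) (ell nu)^`().[c i] *: q nu).

(* gradient of F : (R^d)^{s+1} -> R w.r.t. its argument number nu
   (0-based, i.e. the paper's D_{nu+1}), componentwise via partial derivatives *)
Definition gradArg (F : (nat -> vec) -> R) (q : nat -> vec) (nu : nat) : vec :=
  \row_(j < d) ('D_(delta_mx 0 j : vec)
                  (fun z : vec => F (fun m => if m == nu then z else q m))) (q nu).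

Definition gam (rho sigma : {poly R}) (z : R) : R := rho.[z] / sigma.[z].

Definition omega (rho sigma : {poly R}) (h a : R) (n : nat) : R :=
  derive1n n (fun z : R => powR (gam rho sigma z / h) (- a)) 0 / (n`!)%:R.

Definition node (N s : nat) (x : nat -> nat -> vec) (k : nat) : vec :=
  if (k < N)%N then x k 0%N else x N.-1 s.

Definition Jminus (rho sigma : {poly R}) (h a : R) (X : nat -> vec) (k : nat) : vec :=
  \sum_(n < k.+1) omega rho sigma h a n *: X (k - n)%N.

Definition Jplus (rho sigma : {poly R}) (h a : R) (N : nat) (Y : nat -> vec) (k : nat) : vec :=
  \sum_(n < (N - k).+1) omega rho sigma h a n *: Y (k + n)%N.

Definition Sd (h mu alpha beta : R) (L : vec * vec -> R) (s : nat)
    (ell : nat -> {poly R}) (r : nat) (b c : nat -> R) (rho sigma : {poly R})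
    (N : nat) (x y : nat -> nat -> vec) : R :=
  \sum_(k < N) (Ld h L s ell r b c (x k) + Ld h L s ell r b c (y k))
  - mu * h * \sum_(k < N.+1)
       dotv (Jminus rho sigma h (- alpha) (node N s x) k)
            (Jplus rho sigma h (- beta) N (node N s y) k).

End Defs.

(* Main.v *)
Require Import Defs.
From HB Require Import structures.
From mathcomp Require Import all_boot all_order all_algebra.
From mathcomp Require Import all_classical all_reals all_analysis.
From mathcomp Require Import ring.
Import Order.TTheory GRing.Theory Num.Theory.
Import numFieldNormedType.Exports.
Local Open Scope ring_scope.
Section P1.
Variable R : realType.
Variable d : nat.
Notation vec := 'rV[R]_d.

Lemma dotvDl (u v w : vec) : dotv (u + v) w = dotv u w + dotv v w.
Proof. by rewrite /dotv -big_split /=; apply: eq_bigr => j _; rewrite mxE mulrDl. Qed.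
Lemma dotvDr (u v w : vec) : dotv w (u + v) = dotv w u + dotv w v.
Proof. by rewrite /dotv -big_split /=; apply: eq_bigr => j _; rewrite mxE mulrDr. Qed.
Lemma dotvZl (a : R) (u w : vec) : dotv (a *: u) w = a * dotv u w.
Proof. by rewrite /dotv mulr_sumr; apply: eq_bigr => j _; rewrite mxE mulrA. Qed.
Lemma dotvZr (a : R) (u w : vec) : dotv w (a *: u) = a * dotv w u.
Proof. by rewrite /dotv mulr_sumr; apply: eq_bigr => j _; rewrite mxE mulrCA. Qed.
Lemma dotv0l (w : vec) : dotv 0 w = 0.
Proof. by rewrite /dotv big1 // => j _; rewrite mxE mul0r. Qed.
Lemma dotv0r (w : vec) : dotv w 0 = 0.
Proof. by rewrite /dotv big1 // => j _; rewrite mxE mulr0. Qed.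
Lemma dotvC (u w : vec) : dotv u w = dotv w u.
Proof. by rewrite /dotv; apply: eq_bigr => j _; rewrite mulrC. Qed.
Lemma dotv_suml (I : Type) (rr : seq I) (P : pred I) (F : I -> vec) w :
  dotv (\sum_(i <- rr | P i) F i) w = \sum_(i <- rr | P i) dotv (F i) w.
Proof. by elim/big_rec2: _ => [|i y1 y2 _ <-]; rewrite ?dotv0l ?dotvDl. Qed.
Lemma dotv_sumr (I : Type) (rr : seq I) (P : pred I) (F : I -> vec) w :
  dotv w (\sum_(i <- rr | P i) F i) = \sum_(i <- rr | P i) dotv w (F i).
Proof. by elim/big_rec2: _ => [|i y1 y2 _ <-]; rewrite ?dotv0r ?dotvDr. Qed.

Lemma tri (F : nat -> nat -> R) M :
  \sum_(k < M.+1) \sum_(n < k.+1) F n (k - n)%N =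
  \sum_(n < M.+1) \sum_(m < (M - n).+1) F n m.
Proof.
elim: M => [|M IH]; first by rewrite !big_ord1.
rewrite big_ord_recr /= IH [RHS]big_ord_recr /= subnn big_ord1.
rewrite [in RHS](eq_bigr (fun n : 'I_M.+1 => \sum_(m < (M - n).+1) F n m + F n (M.+1 - n)%N)); last first.
  move=> n _; rewrite (subSn (ltnSE (ltn_ord n))).
  by rewrite big_ord_recr.
rewrite big_split /= -addrA; congr (_ + _).
by rewrite big_ord_recr /= subnn.
Qed.

Lemma widen_tri (G : nat -> R) n M : (n <= M)%N ->
  \sum_(j < (M - n).+1) G j = \sum_(j < M.+1) (if (n + j <= M)%N then G j else 0).
Proof.
move=> nM; rewrite -big_mkcond /=.
rewrite (big_ord_widen M.+1 G); last by rewrite ltnS leq_subr.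
by apply: eq_bigl => j; rewrite ltnS leq_subRL.
Qed.

Lemma tri2 (H : nat -> nat -> R) M :
  \sum_(n < M.+1) \sum_(j < (M - n).+1) H n j =
  \sum_(j < M.+1) \sum_(n < (M - j).+1) H n j.
Proof.
rewrite (eq_bigr (fun n : 'I_M.+1 => \sum_(j < M.+1) (if (n + j <= M)%N then H n j else 0))); last first.
  by move=> n _; rewrite (widen_tri (H n) n M (ltnSE (ltn_ord n))).
rewrite exchange_big /=; apply: eq_bigr => j _.
rewrite (widen_tri (H^~ j) j M (ltnSE (ltn_ord j))); apply: eq_bigr => n _.
by rewrite addnC.
Qed.

End P1.
Arguments tri {R}. Arguments tri2 {R}.
Section P1b.
Variable R : realType.
Variable d : nat.
Notation vec := 'rV[R]_d.
Variables (rho sigma : {poly R}) (h : R) (N : nat).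
Local Notation om := (omega rho sigma h).

Lemma Jsym c (U V : nat -> vec) :
  \sum_(k < N.+1) dotv (Jminus rho sigma h c U k) (V k) =
  \sum_(k < N.+1) dotv (U k) (Jplus rho sigma h c N V k).
Proof.
rewrite /Jminus /Jplus.
transitivity (\sum_(k < N.+1) \sum_(n < k.+1)
   (fun n j => om c n * dotv (U j) (V (n + j)%N)) n (k - n)%N).
  apply: eq_bigr => k _; rewrite dotv_suml; apply: eq_bigr => n _.
  by rewrite dotvZl subnKC // (ltnSE (ltn_ord n)).
rewrite (tri (fun n j => om c n * dotv (U j) (V (n + j)%N))).
rewrite (tri2 (fun n j => om c n * dotv (U j) (V (n + j)%N))).
apply: eq_bigr => j _; rewrite dotv_sumr; apply: eq_bigr => n _.
by rewrite dotvZr addnC.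
Qed.

Lemma Jmain a b (U V : nat -> vec) :
  (forall p, \sum_(n < p.+1) om a n * om b (p - n)%N = om (a + b) p) ->
  \sum_(k < N.+1) dotv (Jminus rho sigma h a U k) (Jplus rho sigma h b N V k) =
  \sum_(k < N.+1) dotv (U k) (Jplus rho sigma h (a + b) N V k).
Proof.
move=> hc.
transitivity (\sum_(k < N.+1) \sum_(n < k.+1)
   (fun n j => om a n * dotv (U j) (Jplus rho sigma h b N V (n + j)%N)) n (k - n)%N).
  apply: eq_bigr => k _; rewrite /Jminus dotv_suml; apply: eq_bigr => n _.
  by rewrite dotvZl subnKC // (ltnSE (ltn_ord n)).
rewrite (tri (fun n j => om a n * dotv (U j) (Jplus rho sigma h b N V (n + j)%N))).
rewrite (tri2 (fun n j => om a n * dotv (U j) (Jplus rho sigma h b N V (n + j)%N))).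
apply: eq_bigr => j _.
transitivity (\sum_(n < (N - j).+1) \sum_(m < ((N - j) - n).+1)
   om a n * om b m * dotv (U j) (V (j + (n + m))%N)).
  apply: eq_bigr => n _; rewrite /Jplus dotv_sumr mulr_sumr (addnC n j) subnDA.
  by apply: eq_bigr => m _; rewrite dotvZr mulrA addnA.
rewrite -(tri (fun n m => om a n * om b m * dotv (U j) (V (j + (n + m))%N))).
rewrite /Jplus dotv_sumr; apply: eq_bigr => p _.
rewrite dotvZr -hc mulr_suml; apply: eq_bigr => n _.
by rewrite subnKC // (ltnSE (ltn_ord n)).
Qed.

End P1b.
Lemma binrec (K : comRingType) (A B : nat -> K) n :
  \sum_(k < n.+1) 'C(n, k)%:R * (A k * B (n - k).+1) +
  \sum_(k < n.+1) 'C(n, k)%:R * (A k.+1 * B (n - k)%N) =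
  \sum_(k < n.+2) 'C(n.+1, k)%:R * (A k * B (n.+1 - k)%N).
Proof.
rewrite [RHS]big_ord_recl /= bin0 subn0.
rewrite [in RHS](eq_bigr (fun k : 'I_n.+1 => 'C(n, k.+1)%:R * (A k.+1 * B (n - k)%N)
   + 'C(n, k)%:R * (A k.+1 * B (n - k)%N))); last first.
  by move=> k _; rewrite /bump /= ?add1n binS natrD mulrDl subSS.
rewrite big_split /= [RHS]addrA; congr (_ + _).
rewrite big_ord_recl /= bin0 subn0; congr (_ + _).
rewrite [RHS]big_ord_recr /= bin_small // mul0r addr0.
apply: eq_bigr => k _; rewrite /bump /= ?add1n subnSK //.
Qed.
Set Implicit Arguments. Unset Strict Implicit.
Section Smooth.
Variable R : realType.
Variable U : set R.
Hypothesis hU : open U.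

Definition Qd n (f : R -> R) :=
  forall k, (k < n)%N -> forall z, U z -> derivable (derive1n k f) z 1.

Lemma nearU z : U z -> nbhs z U.
Proof. by move=> Uz; apply: open_nbhs_nbhs; split. Qed.

Lemma locn k (f g : R -> R) : (forall z, U z -> f z = g z) ->
  forall z, U z -> derive1n k f z = derive1n k g z.
Proof.
move=> fg; elim: k => [|k IH] z Uz; first exact: fg.
rewrite !derive1nS !derive1E; apply: near_eq_derive.
move: (nearU Uz); apply: filterS => w Uw; exact: IH.
Qed.

Lemma locQ n (f g : R -> R) : (forall z, U z -> f z = g z) -> Qd n f -> Qd n g.
Proof.
move=> fg Qf k kn z Uz; apply: (near_eq_derivable _ (Qf k kn z Uz)).
move: (nearU Uz); apply: filterS => w Uw; exact: locn.
Qed.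

Lemma QS n f : Qd n.+1 f <-> (forall z, U z -> derivable f z 1) /\ Qd n (derive1 f).
Proof.
split.
  move=> Qf; split; first exact: (Qf 0%N).
  by move=> k kn z Uz; rewrite -derive1Sn; apply: Qf.
move=> [df Qf] [|k] kn z Uz; first exact: df.
by rewrite derive1Sn; apply: Qf.
Qed.

Lemma QW n f : Qd n.+1 f -> Qd n f.
Proof. by move=> Qf k kn; apply: Qf; apply: ltnW. Qed.

Lemma Q0 f : Qd 0 f.
Proof. by []. Qed.

Lemma dD (f g : R -> R) z : derivable f z 1 -> derivable g z 1 ->
  derivable (fun w => f w + g w) z 1 /\
  derive1 (fun w => f w + g w) z = derive1 f z + derive1 g z.
Proof.
move=> df dg; split; first exact: (derivableD df dg).
rewrite !derive1E; exact: (deriveD df dg).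
Qed.

Lemma dM (f g : R -> R) z : derivable f z 1 -> derivable g z 1 ->
  derivable (fun w => f w * g w) z 1 /\
  derive1 (fun w => f w * g w) z = f z * derive1 g z + derive1 f z * g z.
Proof.
move=> df dg; split; first exact: (derivableM df dg).
rewrite !derive1E; rewrite (deriveM df dg) /=.
by rewrite /GRing.scale /= [_ * g z]mulrC.
Qed.

Lemma QD n : forall f g, Qd n f -> Qd n g -> Qd n (fun w => f w + g w).
Proof.
elim: n => [|n IH] f g; first by move=> *; apply: Q0.
move=> /QS[df Qf] /QS[dg Qg]; apply/QS; split.
  by move=> z Uz; case: (dD (df z Uz) (dg z Uz)).
apply: (locQ _ (IH _ _ Qf Qg)) => z Uz.
by case: (dD (df z Uz) (dg z Uz)).
Qed.

Lemma QM n : forall f g, Qd n f -> Qd n g -> Qd n (fun w => f w * g w).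
Proof.
elim: n => [|n IH] f g Qf Qg; first exact: Q0.
have [df Qf'] := (QS n f).1 Qf; have [dg Qg'] := (QS n g).1 Qg.
apply/QS; split; first by move=> z Uz; case: (dM (df z Uz) (dg z Uz)).
apply: (locQ (f := fun w => f w * derive1 g w + derive1 f w * g w)).
  by move=> z Uz; case: (dM (df z Uz) (dg z Uz)).
apply: QD; apply: IH.
- exact: (QW Qf).
- exact: Qg'.
- exact: Qf'.
- exact: (QW Qg).
Qed.

Lemma QC n (a : R) : Qd n (fun _ => a).
Proof.
elim: n a => [|n IH] a; first exact: Q0.
apply/QS; split.
  by move=> z _; exact: (derivable_cst a).
apply: (locQ (f := fun _ => 0)) => [z _|]; last exact: IH.
by rewrite (derive1_cst a).
Qed.

Lemma Qpoly n : forall p : {poly R}, Qd n (fun z => p.[z]).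
Proof.
elim: n => [|n IH] p; first exact: Q0.
apply/QS; split.
  by move=> z _; exact: derivable_horner.
apply: (locQ (f := fun z => (p^`()).[z])) => [z _|]; last exact: IH.
by rewrite derivE.
Qed.

Lemma QV n g : (forall z, U z -> g z != 0) -> Qd n g -> Qd n (fun z => (g z)^-1).
Proof.
move=> g0; elim: n => [|n IH] Qg; first exact: Q0.
have [dg Qg'] := (QS n g).1 Qg.
apply/QS; split.
  by move=> z Uz; exact: (derivableV (g0 z Uz) (dg z Uz)).
apply: (locQ (f := fun z => (-1) * ((g z)^-1 * ((g z)^-1 * derive1 g z)))).
  move=> z Uz; rewrite !derive1E (deriveV (g0 z Uz) (dg z Uz)).
  by rewrite /GRing.scale /= -exprVn expr2 mulN1r mulNr mulrA.
apply: QM; first exact: QC.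
have IHn := IH (QW Qg).
apply: QM; first exact: IHn.
by apply: QM; first exact: IHn.
Qed.

Lemma expR_der (u : R -> R) z : derivable u z 1 ->
  derivable (fun w => expR (u w)) z 1 /\
  derive1 (fun w => expR (u w)) z = expR (u z) * derive1 u z.
Proof.
move=> du.
have de : derivable (@expR R) (u z) 1 by apply: ex_derive.
split.
  apply/derivable1_diffP; apply: (@differentiable_comp _ _ _ _ u expR).
    exact/derivable1_diffP.
  exact/derivable1_diffP.
rewrite (derive1_comp du de) derive1E.
by rewrite (@derive_val _ _ _ _ _ _ _ (is_derive_expR (u z))).
Qed.

Lemma QE n u : Qd n u -> Qd n (fun z => expR (u z)).
Proof.
elim: n => [|n IH] Qu; first exact: Q0.
have [du Qu'] := (QS n u).1 Qu.
apply/QS; split; first by move=> z Uz; case: (expR_der (du z Uz)).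
apply: (locQ (f := fun z => expR (u z) * derive1 u z)).
  by move=> z Uz; case: (expR_der (du z Uz)).
by apply: QM; [apply: IH; apply: QW | exact: Qu'].
Qed.

Lemma ln_der (g : R -> R) z : 0 < g z -> derivable g z 1 ->
  derivable (fun w => ln (g w)) z 1 /\
  derive1 (fun w => ln (g w)) z = derive1 g z * (g z)^-1.
Proof.
move=> gz dg.
have dl : derivable (@ln R) (g z) 1 by apply: ex_derive; exact: is_derive1_ln.
split.
  apply/derivable1_diffP; apply: (@differentiable_comp _ _ _ _ g (@ln R)).
    exact/derivable1_diffP.
  exact/derivable1_diffP.
rewrite (derive1_comp dg dl) derive1E.
by rewrite (@derive_val _ _ _ _ _ _ _ (is_derive1_ln gz)) mulrC.
Qed.

Lemma QLn n g : (forall z, U z -> 0 < g z) -> Qd n g -> Qd n (fun z => ln (g z)).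
Proof.
move=> g0; case: n => [|n] Qg; first exact: Q0.
have [dg Qg'] := (QS n g).1 Qg.
apply/QS; split; first by move=> z Uz; case: (ln_der (g0 z Uz) (dg z Uz)).
apply: (locQ (f := fun z => derive1 g z * (g z)^-1)).
  by move=> z Uz; case: (ln_der (g0 z Uz) (dg z Uz)).
apply: QM; first exact: Qg'.
apply: QV; last exact: QW.
by move=> z Uz; rewrite gt_eqF // g0.
Qed.

End Smooth.
Unset Implicit Arguments. Set Strict Implicit.
Set Implicit Arguments. Unset Strict Implicit.
Section Leib.
Variable R : realType.
Variable U : set R.
Hypothesis hU : open U.

Lemma DNadd n : forall F G, Qd U n F -> Qd U n G -> forall z, U z ->
  derive1n n (fun w => F w + G w) z = derive1n n F z + derive1n n G z.
Proof.
elim: n => [|n IH] F G QF QG z Uz; first by [].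
have [dF QF'] := (QS U n F).1 QF; have [dG QG'] := (QS U n G).1 QG.
rewrite !derive1Sn.
have -> : derive1n n (derive1 (fun w => F w + G w)) z =
    derive1n n (fun w => derive1 F w + derive1 G w) z.
  apply: (@locn R U hU n _ _ _ z Uz) => w Uw; by case: (dD (dF w Uw) (dG w Uw)).
exact: IH.
Qed.

Lemma leib n : forall f g, Qd U n f -> Qd U n g -> forall z, U z ->
  derive1n n (fun w => f w * g w) z =
  \sum_(k < n.+1) 'C(n, k)%:R * (derive1n k f z * derive1n (n - k) g z).
Proof.
elim: n => [|n IH] f g Qf Qg z Uz; first by rewrite big_ord1 /= bin0 mul1r.
have [df Qf'] := (QS U n f).1 Qf; have [dg Qg'] := (QS U n g).1 Qg.
rewrite derive1Sn.
have -> : derive1n n (derive1 (fun w => f w * g w)) z =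
    derive1n n (fun w => f w * derive1 g w + derive1 f w * g w) z.
  apply: (@locn R U hU n _ _ _ z Uz) => w Uw; by case: (dM (df w Uw) (dg w Uw)).
have Q1 : Qd U n (fun w => f w * derive1 g w) := QM hU (QW Qf) Qg'.
have Q2 : Qd U n (fun w => derive1 f w * g w) := QM hU Qf' (QW Qg).
rewrite (DNadd Q1 Q2 Uz).
rewrite IH //; last exact: (QW Qf).
rewrite IH //; last exact: (QW Qg).
rewrite -(@binrec _ (fun k => derive1n k f z) (fun k => derive1n k g z)).
congr (_ + _); apply: eq_bigr => k _.
  by rewrite -derive1Sn.
by rewrite -derive1Sn.
Qed.
End Leib.
Unset Implicit Arguments. Set Strict Implicit.
Section Conv.
Variables (R : realType) (rho sigma : {poly R}) (h : R).
Hypotheses (h0 : 0 < h) (rs0 : 0 < rho`_0 / sigma`_0).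

Let g z := gam rho sigma z / h.
Let P : set R := fun z => 0 < g z.
Let U := interior P.

Let hU : open U.
Proof. exact: open_interior. Qed.

Let Pg z : U z -> 0 < g z.
Proof. by move=> Uz; exact: (nbhs_singleton Uz). Qed.

Let gE z : g z = rho.[z] * (sigma.[z])^-1 * h^-1.
Proof. by []. Qed.

Let sig0 z : U z -> sigma.[z] != 0.
Proof.
move=> /Pg; apply: contraTneq => s0.
by rewrite /g /gam s0 invr0 mulr0 mul0r ltxx.
Qed.

Let Qg n : Qd U n g.
Proof.
apply: (locQ hU (f := fun z => rho.[z] * (sigma.[z])^-1 * h^-1)) => [z _ //|].
apply: (QM hU); last exact: (QC hU).
apply: (QM hU); first exact: (Qpoly hU).
by apply: (QV hU); [exact: sig0 | exact: (Qpoly hU)].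
Qed.

Let U0 : U 0.
Proof.
have g00 : 0 < g 0.
  by rewrite /g /gam !horner_coef0 divr_gt0.
have s00 : sigma.[0] != 0.
  by apply: contraTneq g00 => s0; rewrite /g /gam s0 invr0 mulr0 mul0r ltxx.
have dg : derivable g 0 1.
  have d1 : derivable (fun z => rho.[z]) 0 1 by apply: derivable_horner.
  have d2' : derivable (fun z => sigma.[z]) 0 1 by apply: derivable_horner.
  have d2 := derivableV s00 d2'.
  have d3 := (dM d1 d2).1.
  have d4 : derivable (fun _ : R => h^-1) 0 1 by apply: derivable_cst.
  have := (dM d3 d4).1.
  by congr derivable.
have cg : {for 0, continuous g}.
  by apply: differentiable_continuous; apply/derivable1_diffP.
have H := cvgr_gt (g 0) cg 0 g00. exact: H.
Qed.

Definition fpw (e : R) := fun z : R => powR (gam rho sigma z / h) e.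

Let Qf e n : Qd U n (fpw e).
Proof.
apply: (locQ hU (f := fun z => expR (e * ln (g z)))).
  by move=> z Uz; rewrite /fpw /powR gt_eqF // (Pg _ Uz).
apply: (QE hU); apply: (QM hU); first exact: (QC hU).
by apply: (QLn hU) => //; exact: Pg.
Qed.

Lemma conv a b p :
  \sum_(n < p.+1) omega rho sigma h a n * omega rho sigma h b (p - n)%N =
  omega rho sigma h (a + b) p.
Proof.
rewrite /omega.
have -> : derive1n p (fun z => powR (gam rho sigma z / h) (- (a + b))) 0 =
    derive1n p (fun z => fpw (- a) z * fpw (- b) z) 0.
  apply: (locn hU) U0 => z Uz.
  rewrite /fpw opprD powRD //; apply/implyP => _; apply: lt0r_neq0; exact: (Pg _ Uz).
rewrite (leib hU (Qf (- a) p) (Qf (- b) p) U0) mulr_suml.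
apply: eq_bigr => k _.
have kp : (k <= p)%N by rewrite -ltnS.
have := bin_fact kp => /(congr1 (fun n => n%:R : R)); rewrite !natrM => <-.
have c0 : ('C(p, k)%:R : R) != 0 by rewrite pnatr_eq0 -lt0n bin_gt0.
have k0 : ((k`!)%:R : R) != 0 by rewrite pnatr_eq0 -lt0n fact_gt0.
have m0 : (((p - k)`!)%:R : R) != 0 by rewrite pnatr_eq0 -lt0n fact_gt0.
rewrite /fpw; field.
by rewrite c0 k0 m0.
Qed.

End Conv.
Lemma smulE (R : realType) (a b : R) : a *: b = a * b.
Proof. by []. Qed.

Lemma Dshift (R : realType) (V W : normedModType R) (f : V -> W) a v :
  'D_v f a = 'D_1 (fun t : R => f (a + t *: v)) 0.
Proof.
rewrite /derive; set g1 := fun h => h^-1 *: _; set g2 := fun h => h^-1 *: _.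
suff -> : g1 = g2 by [].
by apply/funext => t; rewrite /g1 /g2 /= scale0r !addr0 [_%:A]mulr1 (addrC (t *: v) a).
Qed.

Lemma is_derive_line (R : realType) (V W : normedModType R) (f : V -> W) p v :
  differentiable f p -> is_derive (0 : R) (1 : R) (fun e => f (p + e *: v)) ('D_v f p).
Proof.
move=> df; have dv : derivable f p v by apply: diff_derivable.
split; last by rewrite -Dshift.
have -> : (fun e : R => f (p + e *: v)) = (fun t : R => f (t *: v + p)).
  by apply: funext => t; rewrite addrC.
exact: ((derivable1P f p v).1 dv).
Qed.

Lemma isdM (R : realType) (f : R -> R) (k df : R) :
  is_derive (0 : R) (1 : R) f df -> is_derive (0 : R) (1 : R) (fun e => k * f e) (k * df).
Proof. move=> H; exact: (is_deriveZ k H). Qed.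

Lemma isdS (R : realType) n (F : 'I_n -> R -> R) (dF : 'I_n -> R) :
  (forall i, is_derive (0 : R) (1 : R) (F i) (dF i)) ->
  is_derive (0 : R) (1 : R) (fun e => \sum_(i < n) F i e) (\sum_(i < n) dF i).
Proof.
move=> H; have := is_derive_sum H.
by rewrite fct_sumE.
Qed.

Lemma sum_fst (R : realType) d (I : Type) (rr : seq I) (P : pred I) (F : I -> 'rV[R]_d * 'rV[R]_d) :
  (\sum_(i <- rr | P i) F i).1 = \sum_(i <- rr | P i) (F i).1.
Proof. by elim/big_rec2: _ => // i y1 y2 _ <-. Qed.

Lemma sum_snd (R : realType) d (I : Type) (rr : seq I) (P : pred I) (F : I -> 'rV[R]_d * 'rV[R]_d) :
  (\sum_(i <- rr | P i) F i).2 = \sum_(i <- rr | P i) (F i).2.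
Proof. by elim/big_rec2: _ => // i y1 y2 _ <-. Qed.

Section LdSec.
Variable R : realType.
Variable d : nat.
Local Notation vec := 'rV[R]_d.
Variables (h : R) (L : vec * vec -> R) (s : nat) (ell : nat -> {poly R})
    (r : nat) (b c : nat -> R).
Hypothesis Ldiff : forall z, differentiable L z.

Definition Pq (i : nat) (q : nat -> vec) : vec * vec :=
  (\sum_(nu < s.+1) (ell nu).[c i] *: q nu,
   h^-1 *: \sum_(nu < s.+1) (ell nu)^`().[c i] *: q nu).

Definition Dq (q w : nat -> vec) : R :=
  h * \sum_(i < r) b i.+1 * 'D_(Pq i.+1 w) L (Pq i.+1 q).

Definition Ev (nu : nat) (j : 'I_d) : nat -> vec :=
  fun m => if m == nu then delta_mx 0 j else 0.

Lemma PqD i (q w : nat -> vec) (e : R) :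
  Pq i (fun m => q m + e *: w m) = Pq i q + e *: Pq i w.
Proof.
transitivity ((Pq i q).1 + e *: (Pq i w).1, (Pq i q).2 + e *: (Pq i w).2); last by [].
rewrite /Pq /=; congr pair.
  rewrite scaler_sumr -big_split /=; apply: eq_bigr => nu _.
  by rewrite scalerDr !scalerA mulrC.
rewrite !scaler_sumr -big_split /=; apply: eq_bigr => nu _.
rewrite !scalerDr !scalerA; congr (_ + _); congr (_ *: _); ring.
Qed.

Lemma LdDer (q w : nat -> vec) :
  is_derive (0 : R) (1 : R) (fun e => Ld h L s ell r b c (fun m => q m + e *: w m)) (Dq q w).
Proof.
have -> : (fun e => Ld h L s ell r b c (fun m => q m + e *: w m)) =
    (fun e => h * \sum_(i < r) b i.+1 * L (Pq i.+1 q + e *: Pq i.+1 w)).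
  apply: funext => e; rewrite /Ld big_add1 /= big_mkord; congr (h * _).
  by apply: eq_bigr => i _; rewrite -PqD.
apply: isdM; apply: isdS => i; apply: isdM.
exact: is_derive_line.
Qed.

Lemma gradE (q : nat -> vec) nu j :
  gradArg (Ld h L s ell r b c) q nu 0 j = Dq q (Ev nu j).
Proof.
rewrite /gradArg mxE Dshift.
rewrite -[RHS](@derive_val _ _ _ _ _ _ _ (LdDer q (Ev nu j))).
suff -> : (fun t : R => Ld h L s ell r b c
     (fun m => if m == nu then q nu + t *: delta_mx 0 j else q m)) =
   (fun e : R => Ld h L s ell r b c (fun m => q m + e *: Ev nu j m)) by [].
apply: funext => t; congr (Ld h L s ell r b c _).
apply: funext => m; rewrite /Ev; case: eqP => [->|_]; first by [].
by rewrite scaler0 addr0.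
Qed.

Lemma sum_pick (f : nat -> R) (e : vec) nu : (nu < s.+1)%N ->
  \sum_(m < s.+1) f m *: (if (m : nat) == nu then e else 0) = f nu *: e.
Proof.
move=> hnu; rewrite (bigD1 (Ordinal hnu)) //= eqxx big1 ?addr0 // => m hm.
rewrite ifN ?scaler0 //; apply: contra hm => /eqP mnu; apply/eqP; exact: val_inj.
Qed.

Lemma PqEv i nu j : (nu < s.+1)%N ->
  Pq i (Ev nu j) = ((ell nu).[c i] *: delta_mx 0 j,
                    h^-1 *: ((ell nu)^`().[c i] *: delta_mx 0 j)).
Proof.
move=> hnu; rewrite /Pq /Ev.
by rewrite (sum_pick (fun m => (ell m).[c i])) // (sum_pick (fun m => (ell m)^`().[c i])).
Qed.

Lemma PqE1 i (w : nat -> vec) (nu : 'I_s.+1) :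
  \sum_(j < d) w nu 0 j *: Pq i (Ev nu j) =
  ((ell nu).[c i] *: w nu, h^-1 *: ((ell nu)^`().[c i] *: w nu)).
Proof.
have pE (p : vec * vec) : p = (p.1, p.2) by case: p.
under eq_bigr => j _ do rewrite (PqEv _ _ _ (ltn_ord nu)).
rewrite [LHS]pE sum_fst sum_snd /=.
rewrite [in RHS](row_sum_delta (w nu)) !scaler_sumr; congr pair.
  by apply: eq_bigr => j _; rewrite !scalerA mulrC.
apply: eq_bigr => j _; rewrite !scalerA.
by congr (_ *: _); ring.
Qed.

Lemma PqE i (w : nat -> vec) :
  Pq i w = \sum_(nu < s.+1) \sum_(j < d) w nu 0 j *: Pq i (Ev nu j).
Proof.
have pE (p : vec * vec) : p = (p.1, p.2) by case: p.
under [RHS]eq_bigr do rewrite PqE1.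
rewrite [RHS]pE sum_fst sum_snd /= /Pq; congr pair.
by rewrite scaler_sumr.
Qed.

Lemma DqE (q w : nat -> vec) :
  Dq q w = \sum_(nu < s.+1) dotv (gradArg (Ld h L s ell r b c) q nu) (w nu).
Proof.
transitivity (\sum_(i < r) \sum_(nu < s.+1) \sum_(j < d)
   h * b i.+1 * (w nu 0 j * 'd L (Pq i.+1 q) (Pq i.+1 (Ev nu j)))).
  rewrite /Dq mulr_sumr; apply: eq_bigr => i _.
  rewrite deriveE // (PqE _ w) linear_sum mulrA mulr_sumr; apply: eq_bigr => nu _.
  rewrite linear_sum mulr_sumr; apply: eq_bigr => j _.
  by rewrite linearZ.
rewrite exchange_big /=; apply: eq_bigr => nu _.
rewrite /dotv exchange_big /=; apply: eq_bigr => j _.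
rewrite gradE /Dq -mulrA mulr_suml mulr_sumr; apply: eq_bigr => i _.
rewrite deriveE //; ring.
Qed.

End LdSec.
Section Lin.
Variable R : realType.
Variable d : nat.
Local Notation vec := 'rV[R]_d.

Lemma node_lin N s (x dx : nat -> nat -> vec) (e : R) :
  node N s (fun k nu => x k nu + e *: dx k nu) = (fun k => node N s x k + e *: node N s dx k).
Proof. by apply: funext => k; rewrite /node; case: ifP. Qed.

Lemma Jm_lin rho sigma h a (X D : nat -> vec) (e : R) k :
  Jminus rho sigma h a (fun k => X k + e *: D k) k =
  Jminus rho sigma h a X k + e *: Jminus rho sigma h a D k.
Proof.
rewrite /Jminus scaler_sumr -big_split /=; apply: eq_bigr => n _.
by rewrite scalerDr !scalerA mulrC.
Qed.

Lemma Jp_lin rho sigma h a N (X D : nat -> vec) (e : R) k :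
  Jplus rho sigma h a N (fun k => X k + e *: D k) k =
  Jplus rho sigma h a N X k + e *: Jplus rho sigma h a N D k.
Proof.
rewrite /Jplus scaler_sumr -big_split /=; apply: eq_bigr => n _.
by rewrite scalerDr !scalerA mulrC.
Qed.

Lemma isd_quad (p q m : R) :
  is_derive (0 : R) (1 : R) (fun e => p + e * q + e * (e * m)) q.
Proof.
have H := is_derive_poly (p%:P + q *: 'X + m *: 'X^2) (0 : R).
have -> : (fun e => p + e * q + e * (e * m)) = horner (p%:P + q *: 'X + m *: 'X^2).
  apply: funext => e; rewrite !hornerE /=; ring.
apply: (is_derive_eq H).
rewrite !derivD derivC derivZ derivX derivZ derivXn !hornerE /=; ring.
Qed.

Lemma isd_dot (a bb cc dd : vec) :
  is_derive (0 : R) (1 : R) (fun e => dotv (a + e *: bb) (cc + e *: dd))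
    (dotv bb cc + dotv a dd).
Proof.
have -> : (fun e => dotv (a + e *: bb) (cc + e *: dd)) =
   (fun e => dotv a cc + e * (dotv bb cc + dotv a dd) + e * (e * dotv bb dd)).
  apply: funext => e; rewrite !dotvDl !dotvDr !dotvZl !dotvZr; ring.
exact: isd_quad.
Qed.

Lemma isdD (f g : R -> R) (df dg : R) :
  is_derive (0 : R) (1 : R) f df -> is_derive (0 : R) (1 : R) g dg ->
  is_derive (0 : R) (1 : R) (fun e => f e + g e) (df + dg).
Proof. move=> Hf Hg; exact: (is_deriveD Hf Hg). Qed.

Lemma isdB (f g : R -> R) (df dg : R) :
  is_derive (0 : R) (1 : R) f df -> is_derive (0 : R) (1 : R) g dg ->
  is_derive (0 : R) (1 : R) (fun e => f e - g e) (df - dg).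
Proof. move=> Hf Hg; exact: (is_deriveB Hf Hg). Qed.

Lemma cons_sum (G : nat -> nat -> vec) (dx : nat -> nat -> vec) (Z : nat -> vec) N s :
  (1 <= s)%N ->
  (forall k i, (k < N)%N -> (1 <= i)%N -> (i < s)%N -> G k i = 0) ->
  (forall k, (1 <= k)%N -> (k < N)%N -> G k.-1 s + G k 0%N = Z k) ->
  (forall k, (k.+1 < N)%N -> dx k s = dx k.+1 0%N) ->
  dx 0%N 0%N = 0 -> dx N.-1 s = 0 ->
  \sum_(k < N) \sum_(nu < s.+1) dotv (G k nu) (dx k nu) =
  \sum_(k < N.+1) dotv (Z k) (node N s dx k).
Proof.
case: s => [//|s'] _ Gmid GZ tdx dx00 dxN.
have inner k : (k < N)%N -> \sum_(nu < s'.+2) dotv (G k nu) (dx k nu) =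
    dotv (G k 0%N) (dx k 0%N) + dotv (G k s'.+1) (dx k s'.+1).
  move=> kN; rewrite big_ord_recl big_ord_recr /= big1 ?add0r //.
  move=> i _; rewrite Gmid ?dotv0l //.
  by rewrite ltnS ltn_ord.
case: N Gmid GZ tdx dxN inner => [|M] Gmid GZ tdx dxN inner.
  by rewrite big_ord0 big_ord1 /node /= dxN dotv0r.
rewrite (eq_bigr (fun k : 'I_M.+1 => dotv (G k 0%N) (dx k 0%N) + dotv (G k s'.+1) (dx k s'.+1))); last first.
  by move=> k _; rewrite inner.
rewrite big_split /= big_ord_recl dx00 dotv0r add0r.
rewrite [X in _ + X]big_ord_recr /= /= dxN dotv0r addr0 -big_split /=.
rewrite big_ord_recl /node /= dx00 dotv0r add0r big_ord_recr /= ltnn dxN dotv0r addr0.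
apply: eq_bigr => k _.
rewrite /bump /= ?add1n ltnS (ltn_ord k) tdx; last by rewrite ltnS (ltn_ord k).
rewrite -dotvDl addrC -(GZ k.+1) //.
by rewrite ltnS ltn_ord.
Qed.

End Lin.
Theorem theorem5p2 (R : realType) (d : nat) (h mu alpha beta : R) (N s r : nat)
    (L : 'rV[R]_d * 'rV[R]_d -> R)
    (dpts : nat -> R) (ell : nat -> {poly R}) (b c : nat -> R)
    (rho sigma : {poly R})
    (x y dx : nat -> nat -> 'rV[R]_d) :
  0 < h -> (1 <= s)%N -> 0 < mu ->
  0 <= alpha <= 2^-1 -> 0 <= beta <= 2^-1 ->
  (* L is C^1 *)
  (forall z, differentiable L z) ->
  (forall v, continuous (fun z => 'D_v L z)) ->
  (* control points 0 = d_0 < d_1 < ... < d_s = 1 *)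
  dpts 0%N = 0 -> dpts s = 1 ->
  (forall i, (i < s)%N -> dpts i < dpts i.+1) ->
  (* Lagrange polynomials of degree s with ell_nu(d_i) = delta_{nu i} *)
  (forall nu, (nu <= s)%N -> size (ell nu) = s.+1) ->
  (forall nu i, (nu <= s)%N -> (i <= s)%N ->
     (ell nu).[dpts i] = (if nu == i then 1 else 0)) ->
  (* quadrature nodes in [0,1] *)
  (forall i, (1 <= i <= r)%N -> 0 <= c i <= 1) ->
  (* gamma = rho / sigma with rho_0 / sigma_0 > 0 *)
  0 < rho`_0 / sigma`_0 ->
  (* transition conditions *)
  (forall k, (k.+1 < N)%N -> x k s = x k.+1 0%N) ->
  (forall k, (k.+1 < N)%N -> y k s = y k.+1 0%N) ->
  (* (i) *)
  (forall k, (1 <= k)%N -> (k < N)%N ->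
     gradArg (Ld h L s ell r b c) (x k.-1) s
     + gradArg (Ld h L s ell r b c) (x k) 0%N
     - (mu * h) *: Jminus rho sigma h (- (alpha + beta)) (node N s x) k = 0) ->
  (* (ii) *)
  (forall k i, (k < N)%N -> (1 <= i)%N -> (i < s)%N ->
     gradArg (Ld h L s ell r b c) (x k) i = 0) ->
  (* (iii) *)
  (forall k, (1 <= k)%N -> (k < N)%N ->
     gradArg (Ld h L s ell r b c) (y k.-1) s
     + gradArg (Ld h L s ell r b c) (y k) 0%N
     - (mu * h) *: Jplus rho sigma h (- (alpha + beta)) N (node N s y) k = 0) ->
  (* (iv) *)
  (forall k i, (k < N)%N -> (1 <= i)%N -> (i < s)%N ->
     gradArg (Ld h L s ell r b c) (y k) i = 0) ->
  (* admissible variations *)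
  (forall k, (k.+1 < N)%N -> dx k s = dx k.+1 0%N) ->
  dx 0%N 0%N = 0 -> dx N.-1 s = 0 ->
  is_derive (0 : R) (1 : R)
    (fun eps : R => Sd h mu alpha beta L s ell r b c rho sigma N
        (fun k nu => x k nu + eps *: dx k nu)
        (fun k nu => y k nu + eps *: dx k nu))
    0.
Proof.
move=> h0 s1 mu0 ha hb Ldiff Lcont d0 ds dinc ellsz elld cq rs0 tx ty hi hii hiii hiv tdx dx00 dxN.
set JmX := Jminus rho sigma h (- (alpha + beta)) (node N s x).
set JpY := Jplus rho sigma h (- (alpha + beta)) N (node N s y).
set G := fun k nu => gradArg (Ld h L s ell r b c) (x k) nu + gradArg (Ld h L s ell r b c) (y k) nu.
set Ak := Jminus rho sigma h (- alpha) (node N s x).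
set Bk := Jminus rho sigma h (- alpha) (node N s dx).
set Ck := Jplus rho sigma h (- beta) N (node N s y).
set Dk := Jplus rho sigma h (- beta) N (node N s dx).
have E : (fun eps : R => Sd h mu alpha beta L s ell r b c rho sigma N
        (fun k nu => x k nu + eps *: dx k nu)
        (fun k nu => y k nu + eps *: dx k nu)) =
   (fun e => \sum_(k < N) (Ld h L s ell r b c (fun m => x k m + e *: dx k m)
                          + Ld h L s ell r b c (fun m => y k m + e *: dx k m))
      - mu * h * \sum_(k < N.+1) dotv (Ak k + e *: Bk k) (Ck k + e *: Dk k)).
  apply: funext => e; rewrite /Sd !node_lin; congr (_ - _ * _).
  by apply: eq_bigr => k _; rewrite Jm_lin Jp_lin.
rewrite E; clear E.
apply: is_derive_eq.
  apply: isdB.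
    apply: (@isdS _ _ (fun k e => Ld h L s ell r b c (fun m => x k m + e *: dx k m)
                          + Ld h L s ell r b c (fun m => y k m + e *: dx k m))) => k.
    by apply: isdD; apply: LdDer.
  apply: isdM.
  apply: (@isdS _ _ (fun k e => dotv (Ak k + e *: Bk k) (Ck k + e *: Dk k))) => k.
  exact: isd_dot.
have cons : \sum_(k < N) (@Dq R d h L s ell r b c (x k) (dx k) + @Dq R d h L s ell r b c (y k) (dx k))
    = mu * h * \sum_(k < N.+1) dotv (JmX k + JpY k) (node N s dx k).
  transitivity (\sum_(k < N) \sum_(nu < s.+1) dotv (G k nu) (dx k nu)).
    apply: eq_bigr => k _; rewrite !DqE // -big_split /=.
    by apply: eq_bigr => nu _; rewrite dotvDl.
  rewrite (@cons_sum R d G dx (fun k => (mu * h) *: (JmX k + JpY k)) N s s1) //.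
  - rewrite mulr_sumr; apply: eq_bigr => k _; exact: dotvZl.
  - by move=> k i kN i1 ilt; rewrite /G hii // hiv // addr0.
  - move=> k k1 kN; rewrite /G addrACA.
    have := hi k k1 kN; move/eqP; rewrite subr_eq0 => /eqP ->.
    have := hiii k k1 kN; move/eqP; rewrite subr_eq0 => /eqP ->.
    by rewrite scalerDr.
rewrite cons big_split /=.
have cv := @conv R rho sigma h h0 rs0 (- alpha) (- beta).
rewrite (@Jmain R d rho sigma h N (- alpha) (- beta) (node N s dx) (node N s y) cv).
rewrite (@Jmain R d rho sigma h N (- alpha) (- beta) (node N s x) (node N s dx) cv).
rewrite -(@Jsym R d rho sigma h N (- alpha + - beta) (node N s x) (node N s dx)) -opprD.
rewrite -big_split /= -/JmX -/JpY.
rewrite -mulrBr -sumrB big1 ?mulr0 // => k _.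
by rewrite dotvDl (@dotvC R d (node N s dx k)) addrC subrr.
Qed.
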